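(* Let $f\in A[X]$ be monic with discriminant $\Delta=\mathrm{Res}_X(f,f')\neq 0$, $r=v(\Delta)$, and let $N>2r$ be an integer. Let $f_N\in(A/\pi^NA)[X]$ be the reduction of $f$ modulo $\pi^N$ and $S_N\subseteq A/\pi^NA$ its set of roots. Then every root of $f$ in $K$ lies in $A$, and the map $x\mapsto[\overline{x}]$ (where $\overline{x}$ is the reduction of $x$ modulo $\pi^NA$ and $[\cdot]$ the $\approx$-class) is a bijection from the set of roots of $f$ in $K$ onto $S_N/\approx$. In particular, the number of roots of $f$ in $K$ equals $|S_N/\approx|$.
   Context: $K$ is a field complete with respect to a non-archimedean discrete valuation $v$, normalized by $v(\pi)=1$ for a uniformizer $\pi$ of the valuation ring $A=\{x\in K: v(x)\geq 0\}$; the residue field $A/\pi A$ is finite. The equivalence relation $\approx$ on $S_N$ is: $x\approx y$ iff either $N\leq r$ and $x=y$, or $N>r$ and $x\equiv y \pmod{\overline{\pi}^{\,r+1}}$, where $\overline{\pi}$ is the image of $\pi$ in $A/\pi^NA$. *)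

(* Defs.v *)
From HB Require Import structures.
From mathcomp Require Import all_boot all_order all_algebra.
Set Implicit Arguments. Unset Strict Implicit. Unset Printing Implicit Defensive.
Import Order.TTheory GRing.Theory Num.Theory.
Local Open Scope ring_scope.

(* A (normalized, discrete) valuation on a field K is encoded by a function
   v : K -> int whose value at 0 is irrelevant (v 0 "= +oo").                *)

Definition vge (K : fieldType) (v : K -> int) (x : K) (n : int) : bool :=
  (x == 0) || (n <= v x).

Definition inA (K : fieldType) (v : K -> int) (x : K) : bool := vge v x 0.

Definition congA (K : fieldType) (v : K -> int) (n : int) (x y : K) : bool :=
  vge v (x - y) n.

Definition discrete_valuation (K : fieldType) (v : K -> int) (pi : K) : Prop :=
  [/\ forall x y : K, x != 0 -> y != 0 -> v (x * y) = v x + v y,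
      forall x y : K, x != 0 -> y != 0 -> x + y != 0 ->
        Num.min (v x) (v y) <= v (x + y),
      pi != 0 & v pi = 1].

Definition val_cauchy (K : fieldType) (v : K -> int) (u : nat -> K) : Prop :=
  forall n : int, exists M : nat, forall i j : nat, (M <= i)%N -> (M <= j)%N ->
    vge v (u i - u j) n.

Definition val_converges (K : fieldType) (v : K -> int) (u : nat -> K) (l : K) : Prop :=
  forall n : int, exists M : nat, forall i : nat, (M <= i)%N -> vge v (u i - l) n.

Definition val_complete (K : fieldType) (v : K -> int) : Prop :=
  forall u : nat -> K, val_cauchy v u -> exists l : K, val_converges v u l.

Definition finite_residue (K : fieldType) (v : K -> int) : Prop :=
  exists s : seq K, all (inA v) s /\
    forall a : K, inA v a -> exists2 b, b \in s & congA v 1 a b.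

(* Elements of A / pi^N A are represented by elements of A (equality in the
   quotient being congA v N). *)
Definition approx (K : fieldType) (v : K -> int) (N : nat) (r : int) (x y : K) : bool :=
  if N%:Z <= r then congA v N%:Z x y else congA v (r + 1) x y.

Definition in_SN (K : fieldType) (v : K -> int) (N : nat) (f : {poly K}) (x : K) : bool :=
  inA v x && vge v f.[x] N%:Z.

(* Main.v *)
Require Import Defs.
From HB Require Import structures.
From mathcomp Require Import all_boot all_order all_algebra.
From mathcomp Require Import zify ring lra.
Set Implicit Arguments. Unset Strict Implicit. Unset Printing Implicit Defensive.
Import Order.TTheory GRing.Theory Num.Theory.
Local Open Scope ring_scope.

Section Res.
Variable R : comNzRingType.
Variable P : pred R.
Hypothesis P0 : P 0.
Hypothesis P1 : P 1.
Hypothesis PD : forall x y, P x -> P y -> P (x + y).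
Hypothesis PN : forall x, P x -> P (- x).
Hypothesis PM : forall x y, P x -> P y -> P (x * y).

Lemma P_sum (I : Type) (r : seq I) (Q : pred I) (F : I -> R) :
  (forall i, Q i -> P (F i)) -> P (\sum_(i <- r | Q i) F i).
Proof. by move=> H; apply: (big_ind (fun x => P x)). Qed.

Lemma P_prod (I : Type) (r : seq I) (Q : pred I) (F : I -> R) :
  (forall i, Q i -> P (F i)) -> P (\prod_(i <- r | Q i) F i).
Proof. by move=> H; apply: (big_ind (fun x => P x)). Qed.

Lemma P_sign (n : nat) : P ((-1) ^+ n).
Proof. by elim: n => [|n IH]; rewrite ?expr0 // exprS; apply: PM => //; apply: PN. Qed.

Lemma P_det n (A : 'M[R]_n) : (forall i j, P (A i j)) -> P (\det A).
Proof.
move=> HA; rewrite /determinant; apply: P_sum => s _; apply: PM.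
  by apply: P_sign.
by apply: P_prod.
Qed.

Lemma P_adj n (A : 'M[R]_n) : (forall i j, P (A i j)) -> forall i j, P (\adj A i j).
Proof.
move=> HA i j; rewrite mxE /cofactor; apply: PM; first exact: P_sign.
by apply: P_det => k l; rewrite !mxE.
Qed.

Lemma res_P (p q : {poly R}) :
  (forall i, P p`_i) -> (forall i, P q`_i) -> P (resultant p q).
Proof.
move=> Hp Hq; apply: P_det => i j; rewrite Sylvester_mxE; case: (split i) => k;
by case: (k <= j)%N; rewrite ?mulr1n ?mulr0n.
Qed.

Lemma res_bezout (p q : {poly R}) :
  (0 < (size q).-1 + (size p).-1)%N ->
  (forall i, P p`_i) -> (forall i, P q`_i) ->
  exists u w : {poly R}, [/\ (forall i, P u`_i), (forall i, P w`_i) &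
     (resultant p q)%:P = u * p + w * q].
Proof.
move=> dS_gt0 Hp Hq.
pose S := Sylvester_mx p q.
have HS : forall i j, P (S i j).
  move=> i j; rewrite Sylvester_mxE; case: (split i) => k;
  by case: (k <= j)%N; rewrite ?mulr1n ?mulr0n.
pose j0 := Ordinal dS_gt0.
pose c := row j0 (\adj S).
have Hc : forall j, P (c 0 j) by move=> j; rewrite mxE; apply: P_adj.
exists (rVpoly (lsubmx c)), (rVpoly (rsubmx c)); split.
- by move=> i; rewrite coef_rVpoly; case: insub => // k; rewrite mxE.
- by move=> i; rewrite coef_rVpoly; case: insub => // k; rewrite mxE.
have E : c *m S = row j0 ((resultant p q)%:M).
  by rewrite -row_mul mul_adj_mx.
move: E; rewrite -[c]hsubmxK /S /Sylvester_mx mul_row_col !mul_rV_lin1 /=.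
rewrite hsubmxK -linearD /= => E.
have Eq := congr1 rVpoly E.
have hsz : forall a b, ((a + b).-1 <= a + b.-1)%N.
  by move=> a [|b]; rewrite ?addn0 ?addnS //= leq_pred.
have harith : forall a b c, (a <= c.-1 -> (a + b).-1 <= (c.-1 + b).-1)%N.
  by move=> a b c0; rewrite -!subn1; lia.
rewrite poly_rV_K in Eq; last first.
  have h1 : forall a b c, (a <= c.-1 -> (a + b).-1 <= c.-1 + b.-1)%N.
    by move=> a b c0; rewrite -!subn1; lia.
  have h2 : forall a b c, (a <= c.-1 -> (a + b).-1 <= b.-1 + c.-1)%N.
    by move=> a b c0; rewrite -!subn1; lia.
  apply: leq_trans (size_add _ _) _; rewrite geq_max; apply/andP; split.
    by apply: leq_trans (size_polyMleq _ _) _; apply: h1; apply: size_poly.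
  by apply: leq_trans (size_polyMleq _ _) _; apply: h2; apply: size_poly.
rewrite Eq -scalemx1 linearZ /= row1 linearZ /= rVpoly_delta /= expr0.
by rewrite alg_polyC.
Qed.
End Res.

Section Val.
Variables (K : fieldType) (v : K -> int) (pi : K).
Hypothesis hv : discrete_valuation v pi.

Lemma vM x y : x != 0 -> y != 0 -> v (x * y) = v x + v y.
Proof. by move: hv; rewrite /discrete_valuation => -[H _ _ _]; apply: H. Qed.

Lemma vD x y : x != 0 -> y != 0 -> x + y != 0 -> Num.min (v x) (v y) <= v (x + y).
Proof. by move: hv; rewrite /discrete_valuation => -[_ H _ _]; apply: H. Qed.

Lemma v1 : v 1 = 0.
Proof. have := vM (oner_neq0 K) (oner_neq0 K); rewrite mulr1; move: (v 1) => a; lia. Qed.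

Lemma vN1 : v (-1) = 0.
Proof.
have h : (-1 : K) != 0 by rewrite oppr_eq0 oner_neq0.
have := vM h h; rewrite mulrNN mulr1 v1; move: (v (-1)) => a; lia.
Qed.

Lemma vN x : v (- x) = v x.
Proof.
have [->|x0] := eqVneq x 0; first by rewrite oppr0.
by rewrite -mulN1r vM ?vN1 ?add0r // oppr_eq0 oner_neq0.
Qed.

Lemma vge0 n : vge v 0 n.
Proof. by rewrite /vge eqxx. Qed.

Lemma vge_le x n m : m <= n -> vge v x n -> vge v x m.
Proof. by rewrite /vge => hmn /orP [->|h] //; apply/orP; right; apply: le_trans h. Qed.

Lemma vgeN x n : vge v (- x) n = vge v x n.
Proof. by rewrite /vge oppr_eq0 vN. Qed.

Lemma vgeD x y n : vge v x n -> vge v y n -> vge v (x + y) n.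
Proof.
have [->|x0] := eqVneq x 0; first by rewrite add0r.
have [->|y0] := eqVneq y 0; first by rewrite addr0.
rewrite /vge (negbTE x0) (negbTE y0) /=.
have [->|s0] := eqVneq (x + y) 0 => //= hx hy.
have := vD x0 y0 s0; rewrite /Num.min; case: ifP => _ h.
  exact: le_trans h.
exact: le_trans h.
Qed.

Lemma vgeB x y n : vge v x n -> vge v y n -> vge v (x - y) n.
Proof. by move=> hx hy; apply: vgeD => //; rewrite vgeN. Qed.

Lemma vgeM x y n m : vge v x n -> vge v y m -> vge v (x * y) (n + m).
Proof.
have [->|x0] := eqVneq x 0; first by rewrite mul0r /vge eqxx.
have [->|y0] := eqVneq y 0; first by rewrite mulr0 /vge eqxx.
by rewrite /vge mulf_eq0 (negbTE x0) (negbTE y0) /= vM // => hx hy; apply: lerD.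
Qed.

Lemma vgeMA x y n : vge v x n -> inA v y -> vge v (x * y) n.
Proof. by move=> hx hy; have := vgeM hx hy; rewrite addr0. Qed.

Lemma vgeAM x y n : inA v x -> vge v y n -> vge v (x * y) n.
Proof. by move=> hx hy; rewrite mulrC; apply: vgeMA. Qed.

Lemma vge_v x : vge v x (v x).
Proof. by rewrite /vge lexx orbT. Qed.

Lemma vge_nz x n : x != 0 -> vge v x n = (n <= v x).
Proof. by rewrite /vge => /negbTE ->. Qed.

Lemma vge_strict x y : x != 0 -> vge v y (v x + 1) -> x + y != 0 /\ v (x + y) = v x.
Proof.
move=> x0 hy.
have s0 : x + y != 0.
  apply/negP => /eqP h; have hy' : y = - x by rewrite -(addKr x y) h addr0.
  move: hy; rewrite hy' vgeN vge_nz //; lia.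
split => //.
have h1 : vge v (x + y) (v x).
  by apply: vgeD; [apply: vge_v | apply: vge_le hy; lia].
apply/eqP; rewrite eq_le; rewrite vge_nz // in h1; rewrite h1 andbT.
rewrite leNgt; apply/negP => h2.
have : vge v ((x + y) - y) (v x + 1).
  by apply: vgeB => //; rewrite vge_nz //; lia.
rewrite addrK vge_nz //; lia.
Qed.

Lemma inA0 : inA v 0. Proof. exact: vge0. Qed.
Lemma inA1 : inA v 1. Proof. by rewrite /inA vge_nz ?oner_neq0 // v1. Qed.
Lemma inAD x y : inA v x -> inA v y -> inA v (x + y). Proof. exact: vgeD. Qed.
Lemma inAN x : inA v x -> inA v (- x). Proof. by rewrite /inA vgeN. Qed.
Lemma inAM x y : inA v x -> inA v y -> inA v (x * y). Proof. exact: vgeMA. Qed.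
Lemma inAX x n : inA v x -> inA v (x ^+ n).
Proof. by move=> hx; elim: n => [|n IH]; rewrite ?expr0 ?inA1 // exprS inAM. Qed.

Lemma vge_inA x n : 0 <= n -> vge v x n -> inA v x.
Proof. by move=> h; apply: vge_le. Qed.

Lemma inA_sum (I : Type) (r : seq I) (Q : pred I) (F : I -> K) :
  (forall i, Q i -> inA v (F i)) -> inA v (\sum_(i <- r | Q i) F i).
Proof. by move=> H; apply: (big_ind (fun x => inA v x)) => //; [apply: inA0 | apply: inAD]. Qed.

Definition polyA (p : {poly K}) := forall i, inA v p`_i.

Lemma hornerA p x : polyA p -> inA v x -> inA v p.[x].
Proof.
move=> hp hx; rewrite horner_coef; apply: inA_sum => i _.
by apply: inAM => //; apply: inAX.
Qed.

Lemma polyA_deriv p : polyA p -> polyA p^`().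
Proof.
move=> hp i; rewrite coef_deriv -mulr_natr; apply: inAM => //.
elim: i.+1 => [|n IH]; rewrite ?mulr0n ?inA0 // mulrS; apply: inAD => //; exact: inA1.
Qed.

Lemma polyA_MXaddC p c : polyA (p * 'X + c%:P) <-> polyA p /\ inA v c.
Proof.
split.
  move=> h; split.
    by move=> i; have := h i.+1; rewrite coefD coefMX coefC /= addr0.
  by have := h 0%N; rewrite coefD coefMX coefC /= add0r.
move=> [hp hc] [|i]; rewrite coefD coefMX coefC /=; first by rewrite add0r.
by rewrite addr0.
Qed.

Lemma polyA_factor p a : polyA p -> inA v a ->
  exists q, polyA q /\ p = q * ('X - a%:P) + (p.[a])%:P.
Proof.
move=> + ha; elim/poly_ind: p => [|p c IH].
  by move=> _; exists 0; split; [move=> i; rewrite coef0; exact: inA0 | rewrite mul0r horner0 add0r].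
move=> /polyA_MXaddC [hp hc]; have [q [hq Ep]] := IH hp.
exists (q * 'X + (p.[a])%:P); split.
  by apply/polyA_MXaddC; split => //; apply: hornerA.
rewrite hornerMXaddC {1}Ep polyCD polyCM; ring.
Qed.

Lemma polyA_taylor f a t : polyA f -> inA v a -> inA v t ->
  exists h, inA v h /\ f.[a + t] = f.[a] + t * f^`().[a] + t ^+ 2 * h.
Proof.
move=> hf ha ht; have [q [hq Ef]] := polyA_factor hf ha.
have [q1 [hq1 Eq]] := polyA_factor hq ha.
exists q1.[a + t]; split; first by apply: hornerA => //; apply: inAD.
have Ed : f^`() = q^`() * ('X - a%:P) + q.
  by rewrite {1}Ef derivD derivC addr0 derivM derivXsubC mulr1.
rewrite Ed {1}Ef {1}Eq !hornerE /=.
rewrite !(hornerE, subrr, mulr0, add0r) /=. ring.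
Qed.

Lemma polyA_lip p x y : polyA p -> inA v x -> inA v y ->
  exists z, inA v z /\ p.[x] - p.[y] = (x - y) * z.
Proof.
move=> hp hx hy; have [q [hq Ep]] := polyA_factor hp hy.
exists q.[x]; split; first exact: hornerA.
rewrite {1}Ep !hornerE; ring.
Qed.

End Val.

From Stdlib Require Import Classical.

Section Main.
Variables (K : fieldType) (v : K -> int) (pi : K).
Hypothesis hv : discrete_valuation v pi.

Lemma vV x : x != 0 -> v x^-1 = - v x.
Proof.
move=> x0; have := vM hv x0 (invr_neq0 x0); rewrite divff // (v1 hv).
move: (v x) (v x^-1) => a b; lia.
Qed.

Lemma root_inA f x : polyA v f -> f \is monic -> root f x -> inA v x.
Proof.
move=> hf hm /eqP rx.
have [//|hx] := boolP (inA v x).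
have x0 : x != 0 by apply: contraNneq hx => ->; exact: inA0.
have vx : v x < 0 by move: hx; rewrite /inA vge_nz // -ltNge.
pose y := x^-1.
have hy : inA v y by rewrite /inA vge_nz ?invr_eq0 // vV //; lia.
have f0 : f != 0 by apply: monic_neq0.
have hxy : x * y = 1 by rewrite /y divff.
move: rx; rewrite horner_coef.
case Es: (size f) => [|n]; first by move: f0; rewrite -size_poly_eq0 Es.
have ln : f`_n = 1 by move/monicP: hm; rewrite /lead_coef Es.
case: n Es ln => [|m] Es ln.
  by rewrite big_ord_recr big_ord0 /= ln mul1r expr0 add0r => /eqP; rewrite oner_eq0.
rewrite big_ord_recr /= ln mul1r => E.
have E2 : (\sum_(i < m.+1) f`_i * x ^+ i) * y ^+ m + x = 0.
  have : (\sum_(i < m.+1) f`_i * x ^+ i + x ^+ m.+1) * y ^+ m = 0 by rewrite E mul0r.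
  by rewrite mulrDl exprS -mulrA -exprMn hxy expr1n mulr1.
suff : inA v x by rewrite (negbTE hx).
have -> : x = - ((\sum_(i < m.+1) f`_i * x ^+ i) * y ^+ m).
  by apply/eqP; rewrite -addr_eq0 addrC E2.
apply: (inAN hv); rewrite big_distrl /=; apply: (inA_sum hv) => i _.
have him : (i <= m)%N by rewrite -ltnS.
have -> : y ^+ m = y ^+ (m - i) * y ^+ i by rewrite -exprD subnK.
rewrite mulrACA -exprMn hxy expr1n mulr1.
by apply: (inAM hv) => //; apply: (inAX hv).
Qed.

End Main.

Lemma roots_exist (K : fieldType) (p : {poly K}) : p != 0 ->
  exists s, uniq s /\ forall x, root p x = (x \in s).
Proof.
have [n] := ubnP (size p); elim: n p => // n IH p hs p0.
case: (classic (exists x, root p x)) => [[x rx] | nr]; last first.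
  exists [::]; split => // y; rewrite in_nil; apply/negP => ry; apply: nr; by exists y.
have [q Ep] := factor_theorem _ _ rx.
have q0 : q != 0 by apply: contra_neq p0; rewrite Ep => ->; rewrite mul0r.
have hq : (size q < n)%N.
  move: hs; rewrite Ep size_mul ?polyXsubC_eq0 // size_XsubC addn2 /=.
  by [].
have [s [us Hs]] := IH q hq q0.
exists (undup (x :: s)); split; first exact: undup_uniq.
move=> y; rewrite mem_undup in_cons Ep rootM root_XsubC Hs orbC.
by [].
Qed.

Section Main2.
Variables (K : fieldType) (v : K -> int) (pi : K).
Hypothesis hv : discrete_valuation v pi.

Lemma res_inA (f g : {poly K}) : polyA v f -> polyA v g -> inA v (resultant f g).
Proof. exact: (res_P (inA0 v) (inA1 hv) (inAD hv) (inAN hv) (inAM hv)). Qed.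

Lemma fprime_bound f a n : polyA v f -> f \is monic -> resultant f f^`() != 0 ->
  inA v a -> vge v f.[a] n -> v (resultant f f^`()) < n ->
  f^`().[a] != 0 /\ v f^`().[a] <= v (resultant f f^`()).
Proof.
move=> hf hm hD ha hfa hn.
have hfd := polyA_deriv hv hf.
have DA : inA v (resultant f f^`()) by apply: res_inA.
have [dS|dS] := posnP ((size f^`()).-1 + (size f).-1)%N; last first.
  have [u [w [hu hw Duw]]] :=
    res_bezout (inA0 v) (inA1 hv) (inAD hv) (inAN hv) (inAM hv) dS hf hfd.
  have E := congr1 (horner^~ a) Duw; rewrite /= !hornerE in E.
  have H : vge v f^`().[a] (v (resultant f f^`()) + 1) -> False.
    move=> h; have : vge v (resultant f f^`()) (v (resultant f f^`()) + 1).
      rewrite {1}E; apply: (vgeD hv).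
        by apply: (vgeAM hv); [apply: (hornerA hv) | apply: (vge_le _ hfa); lia].
      by apply: (vgeAM hv) => //; apply: (hornerA hv).
    rewrite vge_nz //; lia.
  have [e0|nz] := eqVneq f^`().[a] 0; first by exfalso; apply: H; rewrite e0 vge0.
  split => //; rewrite leNgt; apply/negP => lt; apply: H; rewrite vge_nz //; lia.
exfalso.
have sf : (size f <= 1)%N by move: dS; rewrite -subn1; lia.
have f1 : f = 1.
  have f0 : f != 0 by apply: monic_neq0.
  have : size f == 1%N by rewrite eqn_leq sf lt0n size_poly_eq0.
  move=> /size_poly1P [c _ Ec]; move/monicP: hm; move: Ec => -> .
  by rewrite lead_coefC => ->.
move: hfa; rewrite f1 hornerC vge_nz ?oner_neq0 // (v1 hv).
move=> h; rewrite /inA vge_nz // in DA; lia.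
Qed.

Lemma hensel f a (N : int) : val_complete v -> polyA v f -> inA v a ->
  f^`().[a] != 0 -> 2 * v f^`().[a] < N -> vge v f.[a] N ->
  exists2 x, root f x & vge v (x - a) (N - v f^`().[a]).
Proof.
move=> hcomp hf ha fa0 hN hfa.
set e := v f^`().[a] in hN *.
have hfd := polyA_deriv hv hf.
have e0 : 0 <= e by have := hornerA hv hfd ha; rewrite /inA vge_nz.
pose step b := b - f.[b] / f^`().[b].
pose Inv (k : nat) b := [/\ inA v b, f^`().[b] != 0, v f^`().[b] = e,
   vge v (b - a) (N - e) & vge v f.[b] (N + k%:Z)].
have Hstep : forall k b, Inv k b -> Inv k.+1 (step b) /\ vge v (step b - b) (N + k%:Z - e).
  move=> k b [hb fb0 vfb hba hfb].
  set t := f.[b] / f^`().[b].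
  have ht : vge v t (N + k%:Z - e).
    rewrite /t; have [->|fb] := eqVneq f.[b] 0; first by rewrite mul0r vge0.
    rewrite vge_nz ?mulf_neq0 ?invr_neq0 // (vM hv) ?invr_neq0 // (vV hv) // vfb.
    rewrite vge_nz // in hfb; lia.
  have tA : inA v t by apply: (vge_le _ ht); lia.
  have [h [hA Eh]] := polyA_taylor hv hf hb (inAN hv tA).
  have Et : t * f^`().[b] = f.[b] by rewrite /t divfK.
  have Ef : f.[step b] = t ^+ 2 * h.
    by rewrite /step -/t Eh mulNr Et addrN add0r sqrrN.
  have sA : inA v (step b) by apply: (inAD hv) => //; apply: (inAN hv).
  have [z [zA Ez]] := polyA_lip hv hfd sA hb.
  have Es : step b - b = - t by rewrite /step -/t addrC addKr.
  have Efd : f^`().[step b] = f^`().[b] + (- t * z).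
    by rewrite -Es -Ez addrC subrK.
  have hy : vge v (- t * z) (v f^`().[b] + 1).
    rewrite vfb; apply: (vgeMA hv) => //; rewrite (vgeN hv); apply: (vge_le _ ht); lia.
  have [nz ve] := vge_strict hv fb0 hy.
  split; last by rewrite Es (vgeN hv).
  rewrite /Inv; split.
  - exact: sA.
  - by rewrite Efd.
  - by rewrite Efd ve vfb.
  - have -> : step b - a = (b - a) - t by rewrite /step -/t addrAC.
    apply: (vgeB hv); first exact: hba.
    apply: (vge_le _ ht); clear -e0; lia.
  rewrite Ef expr2; apply: (vgeMA hv) => //; apply: (vge_le _ (vgeM hv ht ht)).
  clear -hN e0; lia.
pose s k := iter k step a.
have Hs : forall k, Inv k (s k).
  elim => [|k IH]; last exact: (Hstep _ _ IH).1.
  by split => //; rewrite ?subrr ?vge0 ?addr0.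
have Hd : forall k, vge v (s k.+1 - s k) (N + k%:Z - e) := fun k => (Hstep k _ (Hs k)).2.
have Hc : forall M k, vge v (s (M + k)%N - s M) (N + M%:Z - e).
  move=> M; elim=> [|k IH]; first by rewrite addn0 subrr vge0.
  rewrite addnS.
  have -> : s (M + k).+1 - s M = (s (M + k).+1 - s (M + k)%N) + (s (M + k)%N - s M).
    by rewrite addrA subrK.
  apply: (vgeD hv) => //; apply: (vge_le _ (Hd _)); clear -e0; lia.
have cauchy : val_cauchy v s.
  move=> n; exists (absz n) => i j hi hj.
  have key : forall i, (absz n <= i)%N -> vge v (s i - s (absz n)) n.
    move=> i' hi'; rewrite -(subnKC hi'); apply: (vge_le _ (Hc _ _)); clear -hN e0; lia.
  have -> : s i - s j = (s i - s (absz n)) - (s j - s (absz n)).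
    by rewrite opprB addrA subrK.
  by apply: (vgeB hv); apply: key.
have [x hx] := hcomp s cauchy.
have xA : inA v x.
  have [M hM] := hx 0; have := hM M (leqnn M) => h.
  have -> : x = s M - (s M - x) by rewrite opprB addrC subrK.
  by apply: (vgeB hv) => //; case: (Hs M).
exists x.
  apply/rootP; case: (eqVneq f.[x] 0) => // fx0.
  exfalso; have [M hM] := hx (v f.[x] + 1).
  pose i := maxn M (absz (v f.[x] + 1)).
  have hi := hM i (leq_maxl _ _).
  have [iA _ _ _ hfi] := Hs i.
  have [z [zA Ez]] := polyA_lip hv hf iA xA.
  have h1 : vge v (f.[s i] - f.[x]) (v f.[x] + 1) by rewrite Ez; apply: (vgeMA hv).
  have h2 : vge v f.[s i] (v f.[x] + 1).
    apply: (vge_le _ hfi); have : (absz (v f.[x] + 1)%R <= i)%N by apply: leq_maxr.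
    move=> hle; clear -hle hN e0; lia.
  have : vge v (f.[s i] - (f.[s i] - f.[x])) (v f.[x] + 1) by apply: (vgeB hv).
  rewrite opprB addrC subrK vge_nz // => hq; move: hq; move: (v f.[x]) => q hq.
  clear -hq; lia.
have [M hM] := hx (N - e).
have -> : x - a = (s M - a) - (s M - x) by ring.
by apply: (vgeB hv); [case: (Hs M) | apply: hM].
Qed.

End Main2.

Theorem theorem3p9 (K : fieldType) (v : K -> int) (pi : K)
  (hv : discrete_valuation v pi) (hcomp : val_complete v)
  (hres : finite_residue v)
  (f : {poly K}) (hfA : forall i : nat, inA v f`_i) (hmon : f \is monic)
  (hD : resultant f f^`() != 0)
  (N : nat) (hN : 2 * v (resultant f f^`()) < N%:Z) :
  let r := v (resultant f f^`()) in
  [/\ (* every root of f in K lies in A *)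
      forall x : K, root f x -> inA v x,
      (* the map x |-> [x mod pi^N] lands in S_N/~ *)
      forall x : K, root f x -> in_SN v N f x,
      (* injectivity *)
      forall x y : K, root f x -> root f y -> approx v N r x y -> x = y,
      (* surjectivity *)
      forall a : K, in_SN v N f a -> exists2 x : K, root f x & approx v N r x a
    & (* counting: #roots of f in K = |S_N / ~| (via a transversal L) *)
      exists s : seq K, [/\ uniq s, (forall x, root f x = (x \in s)) &
        exists L : seq K, [/\ all (in_SN v N f) L,
          (forall i j : nat, (i < size L)%N -> (j < size L)%N ->
             approx v N r (nth 0 L i) (nth 0 L j) -> i = j),
          (forall a, in_SN v N f a -> exists2 b, b \in L & approx v N r a b) &
          size L = size s]]].
Proof.
move=> r; rewrite {}/r.
have hf : polyA v f := hfA.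
have hfd := polyA_deriv hv hf.
have DA : inA v (resultant f f^`()) := res_inA hv hf hfd.
move: hD hN DA; set D := resultant f f^`() => hD hN DA.
have r0 : 0 <= v D by move: DA; rewrite /inA vge_nz.
have hNr : ~~ (N%:Z <= v D) by rewrite -ltNge; clear -hN r0; lia.
have Happ : forall x y, approx v N (v D) x y = vge v (x - y) (v D + 1).
  by move=> x y; rewrite /approx (negbTE hNr).
have H1 : forall x, root f x -> inA v x := fun x => root_inA hv hf hmon.
have H2 : forall x, root f x -> in_SN v N f x.
  by move=> x rx; rewrite /in_SN H1 // (rootP rx) vge0.
have H3 : forall x y : K, root f x -> root f y -> approx v N (v D) x y -> x = y.
  move=> x y rx ry; rewrite Happ => hxy.
  case: (eqVneq x y) => // nxy; exfalso.
  have [q [hq Ef]] := polyA_factor hv hf (H1 y ry).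
  rewrite (rootP ry) addr0 in Ef.
  have qx : q.[x] = 0.
    have := rootP rx; rewrite {1}Ef hornerM hornerXsubC => /eqP.
    by rewrite mulf_eq0 subr_eq0 (negbTE nxy) orbF => /eqP.
  have Ed : f^`() = q^`() * ('X - y%:P) + q.
    by rewrite {1}Ef derivM derivXsubC mulr1.
  have Edx : f^`().[x] = q^`().[x] * (x - y) by rewrite Ed !hornerE qx addr0.
  have hx0 : vge v f.[x] (v D + 1) by rewrite (rootP rx) vge0.
  have hlt : v D < v D + 1 by clear; lia.
  have [nz le] := fprime_bound hv hf hmon hD (H1 x rx) hx0 hlt.
  rewrite -/D in le.
  have : vge v f^`().[x] (v D + 1).
    rewrite Edx; apply: (vgeAM hv _ hxy); apply: (hornerA hv).
      exact: (polyA_deriv hv).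
    exact: H1.
  rewrite vge_nz // => hq1; move: hq1 le; move: (v f^`().[x]) => q0 hq1 le.
  clear -hq1 le; lia.
have H4 : forall a : K, in_SN v N f a -> exists2 x : K, root f x & approx v N (v D) x a.
  move=> a /andP [ha hfa].
  have hlt : v D < N%:Z by clear -hN r0; lia.
  have [nz le] := fprime_bound hv hf hmon hD ha hfa hlt.
  rewrite -/D in le.
  have hlt2 : 2 * v f^`().[a] < N%:Z.
    by move: le; move: (v f^`().[a]) => q0 le; clear -le hN r0; lia.
  have [x rx hx] := hensel hv hcomp hf ha nz hlt2 hfa.
  exists x => //; rewrite Happ; apply: (vge_le _ hx).
  by move: le; move: (v f^`().[a]) => q0 le; clear -le hN r0; lia.
have f0 : f != 0 := monic_neq0 hmon.
have [s [us Hs]] := roots_exist f0.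
split => //; exists s; split => //; exists s; split => //.
- by apply/allP => x; rewrite -Hs; exact: H2.
- move=> i j hi hj happ; apply/eqP; rewrite -(nth_uniq 0 hi hj us); apply/eqP.
  by apply: H3 => //; rewrite Hs mem_nth.
- move=> a ha; have [x rx hx] := H4 a ha; exists x; first by rewrite -Hs.
  by move: hx; rewrite !Happ -opprB (vgeN hv).
Qed.
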